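(* For any two distinct jobs $i,j$ and any time $t\ge 0$, we have $i\prec_{l(t)} j$ if and only if $\varphi_i(t)>\varphi_j(t)$.
   Context: Each job $j$ has processing time $p_j>0$ and weight $w_j>0$; jobs are processed on a single machine consecutively, job $j$ having completion time $C_j$, and the cost of a schedule is $\sum_j -w_j/C_j$ (to be minimized). For $t\ge0$, $\varphi_j(t)=\frac{w_j}{p_j(p_j+t)}$. Local dominance: $i\prec_{l(t)} j$ means that if job $j$ starts at time $t$ and is immediately followed by job $i$, then exchanging the positions of $i$ and $j$ (so that $i$ starts at $t$ and is immediately followed by $j$) strictly decreases the cost; since the completion times of all other jobs are unchanged, this means $\frac{w_i}{t+p_i}+\frac{w_j}{t+p_i+p_j}>\frac{w_j}{t+p_j}+\frac{w_i}{t+p_i+p_j}$. *)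

(* Defs.v *)
From mathcomp Require Import all_boot all_order all_algebra.
Set Implicit Arguments. Unset Strict Implicit. Unset Printing Implicit Defensive.
Import Order.TTheory GRing.Theory Num.Theory.
Local Open Scope ring_scope.

Definition phi (R : realFieldType) (J : Type) (p w : J -> R) (j : J) (t : R) : R :=
  w j / (p j * (p j + t)).

(* Local dominance i <_{l(t)} j: swapping (j at t, then i) into (i at t, then j)
   strictly decreases the cost sum -w/C, i.e. the cost contributions
   -(w_j/(t+p_j) + w_i/(t+p_j+p_i)) > -(w_i/(t+p_i) + w_j/(t+p_i+p_j)). *)
Definition local_dom (R : realFieldType) (J : Type) (p w : J -> R) (t : R) (i j : J) : Prop :=
  (- (w i / (t + p i)) - w j / (t + p i + p j))
    < (- (w j / (t + p j)) - w i / (t + p j + p i)).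

(* Main.v *)
Require Import Defs.
From mathcomp Require Import all_boot all_order all_algebra.
From mathcomp Require Import ring lra.
Import Order.TTheory GRing.Theory Num.Theory.
Local Open Scope ring_scope.

Theorem lemma1 (R : realFieldType) (J : Type) (p w : J -> R)
  (hp : forall k, 0 < p k) (hw : forall k, 0 < w k)
  (i j : J) (hij : i <> j) (t : R) (ht : 0 <= t) :
  local_dom p w t i j <-> phi p w j t < phi p w i t.
Proof.
rewrite /local_dom /phi.
have ha := hp i; have hb := hp j.
set a := p i in ha *; set b := p j in hb *.
set D := w i * b * (b + t) - w j * a * (a + t).
have n1 : t + a + b != 0 by apply: lt0r_neq0; lra.
have n2 : t + b != 0 by apply: lt0r_neq0; lra.
have n3 : t + a != 0 by apply: lt0r_neq0; lra.
have n4 : t + b + a != 0 by apply: lt0r_neq0; lra.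
have n5 : a + t != 0 by apply: lt0r_neq0; lra.
have n6 : b + t != 0 by apply: lt0r_neq0; lra.
have n7 : a != 0 by apply: lt0r_neq0; lra.
have n8 : b != 0 by apply: lt0r_neq0; lra.
have E1 : 0 < (t + a) * (t + b) * (t + a + b) by rewrite !mulr_gt0 //; lra.
have E2 : 0 < a * (a + t) * (b * (b + t)) by rewrite !mulr_gt0 //; lra.
have H1 : (- (w j / (t + b)) - w i / (t + b + a)) - (- (w i / (t + a)) - w j / (t + a + b))
   = D * ((t + a) * (t + b) * (t + a + b))^-1.
  by rewrite /D; field; rewrite ?n1 ?n2 ?n3 ?n4 ?n5 ?n6 ?n7 ?n8.
have H2 : w i / (a * (a + t)) - w j / (b * (b + t)) = D * (a * (a + t) * (b * (b + t)))^-1.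
  by rewrite /D; field; rewrite ?n1 ?n2 ?n3 ?n4 ?n5 ?n6 ?n7 ?n8.
rewrite -subr_gt0 H1 pmulr_lgt0 ?invr_gt0 //.
rewrite -[w j / _ < _]subr_gt0 H2 pmulr_lgt0 ?invr_gt0 //.
Qed.
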